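(* Let $G$ be a simple undirected graph with exactly three leaves. (1) If $G$ admits a taming net, then $G$ has no sapling. (2) If an $X$-net $\mathbb{H}$ of $G$ has no parallel arcs, then every $\mathbb{H}$-tamed subset of $X$ is $\mathbb{H}$-local.
   Context: A sapling of $G$ is an induced tree of $G$ containing all three leaves of $G$. For $U,V\subseteq V(G)$, a $UV$-path is a single vertex of $U\cap V$ or a path with one end in $U$ and the other in $V$; a $UV$-rung is a vertex-minimal induced $UV$-path. $\nabla(\mathbb{H})$ adds an edge between every two leaves of $\mathbb{H}$. An $X$-net ($X\subseteq V(G)$) is a finite loopless multigraph $\mathbb{H}$ whose nodes and arcs are subsets of $X$ such that: (N1) $\mathbb{H}$ is connected and $\nabla(\mathbb{H})$ biconnected; (N2) the arcs are nonempty, pairwise disjoint, and partition $X$; (N3) $\mathbb{H}$ has exactly three leaf nodes, each a single leaf vertex of $G$; (N4) for each arc $E$ with end-nodes $U,V$, each vertex of $E$ lies on a $UV$-rung of $G[E]$; (N5) for arc $E$ and node $V$, $E\cap V\ne\emptyset$ iff $V$ is an end-node of $E$; (N6) for $u,v\in X$ in distinct arcs $E,F$, $uv\in E(G)$ iff $E,F$ share an end-node $V$ with $\{u,v\}\subseteq V$. A net is an $X$-net for some $X$. For an $X$-net $\mathbb{H}$: $S\subseteq X$ is $\mathbb{H}$-tamed if every two vertices of $S$ lie in a common arc or a common node; $Y\subseteq V(G)\setminus X$ is $\mathbb{H}$-tamed if the set of vertices of $X$ adjacent to $Y$ is $\mathbb{H}$-tamed; $\mathbb{H}$ is taming if every $Y\subseteq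 V(G)\setminus X$ with $G[Y]$ connected is $\mathbb{H}$-tamed. A triad is $(V_1\cap V_2)\cup(V_2\cap V_3)\cup(V_3\cap V_1)$ for nodes $V_1,V_2,V_3$ forming a triangle in $\mathbb{H}$; $S\subseteq X$ is $\mathbb{H}$-local if $S$ is contained in a node, an arc, or a triad of $\mathbb{H}$. *)

(* Defs.v *)
(* Finite simple graphs as symmetric irreflexive relations. *)
From mathcomp Require Import all_boot.

Set Implicit Arguments. Unset Strict Implicit. Unset Printing Implicit Defensive.

Section Defs.
Variable T : finType.
Variable e : rel T.

Definition conn_in (T' : finType) (r : rel T') (S : {set T'}) : Prop :=
  forall x y, x \in S -> y \in S ->
    exists p : seq T', [/\ path r x p, all (mem S) p & last x p = y].

Definition leafG (v : T) : bool := #|[set u | e v u]| == 1.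
Definition leavesG : {set T} := [set v | leafG v].

Definition has_cycle_in (S : {set T}) : Prop :=
  exists c : seq T, [/\ 3 <= size c, uniq c, all (mem S) c & cycle e c].

Definition induced_tree (S : {set T}) : Prop :=
  S != set0 /\ conn_in e S /\ ~ has_cycle_in S.

Definition sapling (S : {set T}) : Prop := induced_tree S /\ leavesG \subset S.

(* p is a UV-path of G[W] (a single vertex of U :&: V is the case size p = 1) *)
Definition uvpath (W U V : {set T}) (p : seq T) : bool :=
  if p is x :: q then
    [&& uniq p, path e x q, all (mem W) p &
        ((x \in U) && (last x q \in V)) || ((x \in V) && (last x q \in U))]
  else false.

Definition induced_path (p : seq T) : Prop :=
  forall (d : T) (i j : nat), i.+1 < j -> j < size p -> ~~ e (nth d p i) (nth d p j).

Definition rung (W U V : {set T}) (p : seq T) : Prop :=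
  [/\ uvpath W U V p, induced_path p &
      forall p', uvpath W U V p' -> induced_path p' ->
        ~ ([set x in p'] \proper [set x in p])].

Record mgraph := MGraph {
  nodes : {set {set T}};
  arcs  : {set {set T}};
  ends  : {set T} -> {set {set T}}
}.

Variable H : mgraph.

Definition mg_wf : Prop :=
  forall E, E \in arcs H -> ends H E \subset nodes H /\ #|ends H E| = 2.

Definition adjH : rel {set T} :=
  fun U V => [exists E in arcs H, [&& U \in ends H E, V \in ends H E & U != V]].

Definition degH (V : {set T}) : nat := #|[set E in arcs H | V \in ends H E]|.
Definition leafnode (V : {set T}) : bool := (V \in nodes H) && (degH V == 1).
Definition leafnodes : {set {set T}} := [set V in nodes H | leafnode V].

Definition adj_nabla : rel {set T} :=
  fun U V => adjH U V || [&& leafnode U, leafnode V & U != V].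

Definition biconnected (r : rel {set T}) (N : {set {set T}}) : Prop :=
  conn_in r N /\ forall V, V \in N -> conn_in r (N :\ V).

Definition is_net (X : {set T}) : Prop :=
  mg_wf /\
  (forall V, V \in nodes H -> V \subset X) /\
  (* N1 *) (conn_in adjH (nodes H) /\ biconnected adj_nabla (nodes H)) /\
  (* N2 *) partition (arcs H) X /\
  (* N3 *) (#|leafnodes| = 3 /\
            (forall V, V \in leafnodes -> exists v, leafG v /\ V = [set v])) /\
  (* N4 *) (forall E U V, E \in arcs H -> U \in ends H E -> V \in ends H E ->
              U != V -> forall x, x \in E -> exists p, rung E U V p /\ x \in p) /\
  (* N5 *) (forall E V, E \in arcs H -> V \in nodes H ->
              (E :&: V != set0) = (V \in ends H E)) /\
  (* N6 *) (forall u v E F, u \in X -> v \in X -> E \in arcs H -> F \in arcs H ->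
              E != F -> u \in E -> v \in F ->
              (e u v <-> exists2 V, V \in ends H E :&: ends H F & (u \in V) && (v \in V))).

Definition tamed_in (S : {set T}) : Prop :=
  forall u v, u \in S -> v \in S ->
    (exists2 E, E \in arcs H & (u \in E) && (v \in E)) \/
    (exists2 V, V \in nodes H & (u \in V) && (v \in V)).

Definition nbrs_in (X Y : {set T}) : {set T} := [set x in X | [exists y in Y, e x y]].

Definition tamed_out (X Y : {set T}) : Prop := tamed_in (nbrs_in X Y).

Definition taming (X : {set T}) : Prop :=
  forall Y : {set T}, Y \subset ~: X -> conn_in e Y -> tamed_out X Y.

Definition triad (V1 V2 V3 : {set T}) : {set T} :=
  (V1 :&: V2) :|: (V2 :&: V3) :|: (V3 :&: V1).

Definition local (S : {set T}) : Prop :=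
  (exists2 V, V \in nodes H & S \subset V) \/
  (exists2 E, E \in arcs H & S \subset E) \/
  (exists V1 V2 V3, [/\ V1 \in nodes H, V2 \in nodes H, V3 \in nodes H,
      [&& adjH V1 V2, adjH V2 V3 & adjH V3 V1] & S \subset triad V1 V2 V3]).

Definition has_parallel_arcs : Prop :=
  exists E F, [/\ E \in arcs H, F \in arcs H, E != F & ends H E = ends H F].

End Defs.

(* Main.v *)
Require Import Defs.
From mathcomp Require Import all_boot.
From mathcomp Require Import zify.
From Stdlib Require Import Classical_Prop.
Set Implicit Arguments. Unset Strict Implicit. Unset Printing Implicit Defensive.

Section Net.
Variable T : finType.
Variable e : rel T.
Hypothesis e_sym : symmetric e.
Variable X : {set T}.
Variable H : mgraph T.
Hypothesis wf : mg_wf H.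
Hypothesis nodesX : forall V, V \in nodes H -> V \subset X.
Hypothesis part : partition (arcs H) X.
Hypothesis N5 : forall E V, E \in arcs H -> V \in nodes H ->
              (E :&: V != set0) = (V \in ends H E).
Hypothesis N6 : forall u v E F, u \in X -> v \in X -> E \in arcs H -> F \in arcs H ->
              E != F -> u \in E -> v \in F ->
              (e u v <-> exists2 V, V \in ends H E :&: ends H F & (u \in V) && (v \in V)).

Lemma arc_uniq E F x : E \in arcs H -> F \in arcs H -> x \in E -> x \in F -> E = F.
Proof.
move=> EA FA xE xF; apply/eqP; apply/negPn/negP => nEF.
case/and3P: part => _ /trivIsetP tI _.
by move: (tI E F EA FA nEF) => /disjointFr/(_ xE); rewrite xF.
Qed.

Lemma arc_ex x : x \in X -> exists2 E, E \in arcs H & x \in E.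
Proof.
case/and3P: part => /eqP cov _ _; rewrite -cov => /bigcupP[E EA xE].
by exists E.
Qed.

Lemma arc_X E x : E \in arcs H -> x \in E -> x \in X.
Proof.
case/and3P: part => /eqP cov _ _ EA xE; rewrite -cov; apply/bigcupP; by exists E.
Qed.

Lemma end_of E V x : E \in arcs H -> V \in nodes H -> x \in E -> x \in V -> V \in ends H E.
Proof.
move=> EA VN xE xV; rewrite -N5 //; apply/set0Pn; exists x; by rewrite inE xE xV.
Qed.

Lemma ends_node E V : E \in arcs H -> V \in ends H E -> V \in nodes H.
Proof. by move=> EA VE; case: (wf EA) => /subsetP s _; apply: s. Qed.

Lemma ends2 E V : E \in arcs H -> V \in ends H E ->
  exists2 A, A != V & ends H E = [set V; A].
Proof.
move=> EA VE; case: (wf EA) => _ /eqP/cards2P[P [Q [nPQ eq]]].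
move: VE; rewrite eq !inE => /orP[]/eqP->.
  by exists Q => //; rewrite eq_sym.
by exists P => //; rewrite setUC.
Qed.

Lemma adj6 u v E F V : E \in arcs H -> F \in arcs H -> E != F -> u \in E -> v \in F ->
  V \in ends H E -> V \in ends H F -> u \in V -> v \in V -> e u v.
Proof.
move=> EA FA nEF uE vF VE VF uV vV.
apply/(N6 (arc_X EA uE) (arc_X FA vF) EA FA nEF uE vF).
by exists V; rewrite ?inE ?VE ?VF ?uV ?vV.
Qed.


Lemma common_node S x y K K' : tamed_in H S -> x \in S -> y \in S ->
  K \in arcs H -> K' \in arcs H -> K != K' -> x \in K -> y \in K' ->
  exists N, [/\ N \in nodes H, N \in ends H K, N \in ends H K', x \in N & y \in N].
Proof.
move=> tS xS yS KA KA' nK xK yK'.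
case: (tS x y xS yS) => [[M MA /andP[xM yM]]|[N NN /andP[xN yN]]].
  by rewrite (arc_uniq KA MA xK xM) (arc_uniq KA' MA yK' yM) eqxx in nK.
by exists N; split => //; [apply: (end_of KA NN xK xN) | apply: (end_of KA' NN yK' yN)].
Qed.

Lemma part2 (S : {set T}) : (exists V, V \in nodes H) -> ~ has_parallel_arcs H ->
  S \subset X -> tamed_in H S -> local H S.
Proof.
move=> [V0 V0N] npar sX tS.
case: (set_0Vmem S) => [S0|[s sS]].
  by left; exists V0; rewrite // S0 sub0set.
have [E EA sE] := arc_ex (subsetP sX s sS).
have [SE|] := boolP (S \subset E).
  by right; left; exists E.
case/subsetPn => v vS vE.
have [F FA vF] := arc_ex (subsetP sX v vS).
have nEF : E != F by apply/negP => /eqP eEF; rewrite eEF vF in vE.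
have [V [VN VE VF sV vV]] := common_node tS sS vS EA FA nEF sE vF.
have [SV|] := boolP (S \subset V).
  by left; exists V.
case/subsetPn => w wS wV.
have [A nAV eE] := ends2 EA VE.
have [B nBV eF] := ends2 FA VF.
have nAB : A != B.
  apply/negP => /eqP eAB; apply: npar; exists E, F; split => //.
  by rewrite eE eF eAB.
have [G GA wG] := arc_ex (subsetP sX w wS).
have nGE : G != E.
  apply/negP => /eqP eGE; subst G.
  have [N [_ NE NF wN _]] := common_node tS wS vS EA FA nEF wG vF.
  move: NE NF; rewrite eE eF !inE => /orP[]/eqP eN; subst N.
    by rewrite wN in wV.
  by case/orP => /eqP eA; [move: nAV|move: nAB]; rewrite eA eqxx.
have nGF : G != F.
  apply/negP => /eqP eGF; subst G.
  have [N [_ NF NE wN _]] := common_node tS wS sS FA EA nGE wG sE.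
  move: NF NE; rewrite eE eF !inE => /orP[]/eqP eN; subst N; first by rewrite wN in wV.
  by case/orP => /eqP eA; [move: nBV|move: nAB]; rewrite eA eqxx.
have [N1 [_ N1G N1E wN1 _]] := common_node tS wS sS GA EA nGE wG sE.
have eN1 : N1 = A.
  by move: N1E; rewrite eE !inE => /orP[]/eqP eN //; rewrite -eN wN1 in wV.
subst N1.
have [N2 [_ N2G N2F wN2 _]] := common_node tS wS vS GA FA nGF wG vF.
have eN2 : N2 = B.
  by move: N2F; rewrite eF !inE => /orP[]/eqP eN //; rewrite -eN wN2 in wV.
subst N2.
have eG : ends H G = [set A; B].
  have [C nCA eG] := ends2 GA N1G.
  move: N2G; rewrite eG !inE => /orP[]/eqP eB; first by rewrite eB eqxx in nAB.
  by rewrite eB.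
have info : forall x y Y, x \in S -> y \in S -> Y \in arcs H -> y \in Y ->
    (x \in Y) \/ (exists2 N, N \in ends H Y & x \in N).
  move=> x y Y xS yS YA yY; case: (tS x y xS yS) => [[M MA /andP[xM yM]]|[N NN /andP[xN yN]]].
    by left; rewrite (arc_uniq YA MA yY yM).
  by right; exists N => //; apply: (end_of YA NN yY yN).
have inends : forall x Y N, Y \in arcs H -> x \in Y -> N \in nodes H -> x \in N -> N \in ends H Y.
  by move=> x Y N YA xY NN xN; apply: (end_of YA NN xY xN).
have VN' : A \in nodes H by apply: (ends_node EA); rewrite eE !inE eqxx orbT.
have BN : B \in nodes H by apply: (ends_node FA); rewrite eF !inE eqxx orbT.
right; right; exists V, A, B; split => //.
  apply/and3P; split; apply/existsP.
  - by exists E; rewrite EA eE !inE !eqxx orbT /= eq_sym.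
  - by exists G; rewrite GA eG !inE !eqxx orbT.
  - by exists F; rewrite FA eF !inE !eqxx orbT /= nBV.
apply/subsetP => x xS.
have hs : [|| x \in E, x \in V | x \in A].
  case: (info x s E xS sS EA sE) => [->//|[N]]; rewrite eE !inE => /orP[]/eqP-> ->; by rewrite ?orbT.
have hv : [|| x \in F, x \in V | x \in B].
  case: (info x v F xS vS FA vF) => [->//|[N]]; rewrite eF !inE => /orP[]/eqP-> ->; by rewrite ?orbT.
have hw : [|| x \in G, x \in A | x \in B].
  case: (info x w G xS wS GA wG) => [->//|[N]]; rewrite eG !inE => /orP[]/eqP-> ->; by rewrite ?orbT.
have d1 : ~~ [&& x \in E & x \in F].
  by apply/negP => /andP[h1 h2]; rewrite (arc_uniq EA FA h1 h2) eqxx in nEF.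
have d2 : ~~ [&& x \in E & x \in G].
  by apply/negP => /andP[h1 h2]; rewrite (arc_uniq EA GA h1 h2) eqxx in nGE.
have d3 : ~~ [&& x \in F & x \in G].
  by apply/negP => /andP[h1 h2]; rewrite (arc_uniq FA GA h1 h2) eqxx in nGF.
have d4 : ~~ [&& x \in E & x \in B].
  apply/negP => /andP[h1 h2]; move: (inends x E B EA h1 BN h2); rewrite eE !inE.
  by rewrite (negbTE nBV) eq_sym (negbTE nAB).
have d5 : ~~ [&& x \in F & x \in A].
  apply/negP => /andP[h1 h2]; move: (inends x F A FA h1 VN' h2); rewrite eF !inE.
  by rewrite (negbTE nAV) (negbTE nAB).
have d6 : ~~ [&& x \in G & x \in V].
  apply/negP => /andP[h1 h2]; move: (inends x G V GA h1 VN h2); rewrite eG !inE.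
  by rewrite eq_sym (negbTE nAV) eq_sym (negbTE nBV).
rewrite /triad !inE.
move: hs hv hw d1 d2 d3 d4 d5 d6.
by case: (x \in E); case: (x \in F); case: (x \in G); case: (x \in V); case: (x \in A); case: (x \in B).
Qed.

Definition rS (S : {set T}) : rel T := fun u v => [&& u \in S, v \in S & e u v].

Lemma rS_sym (S : {set T}) : symmetric (rS S).
Proof. by move=> u v; rewrite /rS e_sym; case: (u \in S); case: (v \in S). Qed.

Lemma path_rS (S : {set T}) x p : path (rS S) x p -> path e x p && all (mem S) p.
Proof.
elim: p x => [//|y p IH] x /= /andP[/and3P[_ yS exy] /IH /andP[h1 h2]].
by rewrite exy yS h1 h2.
Qed.

Lemma rS_path (S : {set T}) x p : x \in S -> path e x p -> all (mem S) p -> path (rS S) x p.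
Proof.
elim: p x => [//|y p IH] x xS /= /andP[exy pp] /andP[yS ap].
by rewrite /rS xS yS exy /= IH.
Qed.

Lemma conn_root (S : {set T}) r : r \in S ->
  (forall x, x \in S -> exists p, [/\ path e r p, all (mem S) p & last r p = x]) ->
  conn_in e S.
Proof.
move=> rS0 hx.
have cr : forall x, x \in S -> connect (rS S) r x.
  move=> x xS; have [p [pp ap lp]] := hx x xS.
  by apply/connectP; exists p; rewrite ?rS_path.
move=> x y xS yS.
have : connect (rS S) x y.
  apply: (connect_trans _ (cr y yS)).
  by rewrite (sym_connect_sym (@rS_sym S)) cr.
case/connectP => p pp ->; exists p.
by case/andP: (path_rS pp) => h1 h2; split.
Qed.

Lemma prefix_path a s x : path e a s -> x \in a :: s ->
  exists p, [/\ path e a p, {subset p <= s} & last a p = x].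
Proof.
elim: s a => [|b s IH] a.
  by move=> _; rewrite inE => /eqP ->; exists [::].
move=> /= /andP[eab pb]; rewrite inE => /orP[/eqP ->|xb].
  by exists [::].
have [p [pp sp lp]] := IH b pb xb.
exists (b :: p); split => //=; first by rewrite eab.
by move=> y; rewrite !inE => /orP[->//|/sp ->]; rewrite orbT.
Qed.

Lemma path_conn a s : path e a s -> conn_in e [set x in a :: s].
Proof.
move=> pa; apply: (conn_root (r := a)); first by rewrite inE mem_head.
move=> x; rewrite inE => xs.
have [p [pp sp lp]] := prefix_path pa xs.
exists p; split => //; apply/allP => y /sp ys; rewrite /= inE in_cons ys orbT //.
Qed.

Lemma suffix_path c Q z : path e c Q -> z \in Q ->
  exists r, [/\ path e z r, last z r = last c Q & {subset r <= Q}].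
Proof.
move=> pQ zQ; case/splitPr: zQ pQ => p1 p2.
rewrite cat_path last_cat /= => /andP[_ /andP[_ p2p]].
exists p2; split => // y yp; rewrite mem_cat in_cons yp !orbT //.
Qed.


Hypothesis tame : taming e H X.

Definition exitd (E : {set T}) (A B : seq T) (M : {set T}) :=
  exists y z (F : {set T}), [/\ [/\ y \in A, z \in B, y \in E & z \in F],
     [/\ F \in arcs H, F != E, M \in ends H E & M \in ends H F] & (y \in M) && (z \in M)].

Lemma exit_gen E s : E \in arcs H -> forall a t, a \in E ->
  all (fun x => x \notin X) t -> path e a (t ++ s) ->
  last a (t ++ s) \in X -> last a (t ++ s) \notin E ->
  exists M, exitd E (a :: t ++ s) (t ++ s) M.
Proof.
move=> EA; elim: s => [|b s IH] a t aE tX.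
  rewrite cats0 => _ lX lE; move: (mem_last a t); rewrite inE => /orP[/eqP el|lt].
    by rewrite el aE in lE.
  by move/allP: tX => /(_ _ lt); rewrite lX.
move=> pa lX lE.
have [bX|bX] := boolP (b \in X); last first.
  have := IH a (rcons t b) aE; rewrite cat_rcons; apply => //.
  by rewrite all_rcons bX.
have [F FA bF] := arc_ex bX.
have [eFE|nFE] := eqVneq F E.
  subst F; move: pa; rewrite cat_path => /andP[_ /= /andP[_ pb]].
  move: lX lE; rewrite last_cat /= => lX lE.
  have := IH b [::] bF isT pb lX lE => - [M [y [z [G [[yb zs yE zG] h2 h3]]]]].
  exists M, y, z, G; split => //; split => //.
    by rewrite inE mem_cat yb !orbT.
  by rewrite mem_cat in_cons zs !orbT.
have aX := arc_X EA aE.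
have nEF : E != F by rewrite eq_sym.
suff [M [MN ME MF aM bM]] : exists M, [/\ M \in nodes H, M \in ends H E, M \in ends H F, a \in M & b \in M].
  exists M, a, b, F; split => //; last by rewrite aM bM.
  by split => //; rewrite ?mem_head // mem_cat mem_head orbT.
clear lX lE; case: t tX pa => [|x t] tX pa.
  move: pa => /= /andP[eab _].
  have [M] := (N6 aX bX EA FA nEF aE bF).1 eab.
  rewrite inE => /andP[ME MF] /andP[aM bM].
  by exists M; split => //; apply: ends_node ME.
set Y := [set y in x :: t].
have YX : Y \subset ~: X.
  by apply/subsetP => y; rewrite inE => /(allP tX) yX; rewrite inE.
have cY : conn_in e Y.
  by apply: path_conn; move: pa => /= /andP[_]; rewrite cat_path => /andP[].
have tY := tame YX cY.
have aN : a \in nbrs_in e X Y.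
  rewrite inE aX /=; apply/existsP; exists x; rewrite inE mem_head /=.
  by move: pa => /= /andP[].
have bN : b \in nbrs_in e X Y.
  rewrite inE bX /=; apply/existsP; exists (last x t); rewrite inE mem_last /=.
  move: pa => /= /andP[_]; rewrite cat_path => /andP[_ /= /andP[h _]].
  by rewrite e_sym.
case: (tY a b aN bN) => [[K KA /andP[aK bK]]|[M MN /andP[aM bM]]].
  by move: nFE; rewrite (arc_uniq EA KA aE aK) (arc_uniq FA KA bF bK) eqxx.
exists M; split => //; [exact: end_of aM | exact: end_of bM].
Qed.

Lemma exit_lem E a s : E \in arcs H -> a \in E -> path e a s ->
  last a s \in X -> last a s \notin E -> exists M, exitd E (a :: s) s M.
Proof. by move=> EA aE pa lX lE; have := exit_gen EA aE (isT : all _ [::]) pa lX lE. Qed.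


Definition cross (A B : seq T) := forall x w, x \in A -> w \in B -> ~~ e x w.

Lemma cross_sym A B : cross A B -> cross B A.
Proof. by move=> cAB x w xB wA; rewrite e_sym cAB. Qed.

Lemma exitd_sub E A B A' B' M : {subset A <= A'} -> {subset B <= B'} ->
  exitd E A B M -> exitd E A' B' M.
Proof.
move=> sA sB [y [z [F [[yA zB yE zF] h2 h3]]]].
by exists y, z, F; split => //; split => //; [apply: sA | apply: sB].
Qed.

Lemma stay_exit E A B l : E \in arcs H -> l \in E -> exitd E A B [set l] -> False.
Proof.
move=> EA lE [y [z [F [[yA zB yE zF] [FA nFE _ _] /andP[]]]]].
rewrite !inE => /eqP ey /eqP ez; subst y z.
by move: nFE; rewrite (arc_uniq EA FA lE zF) eqxx.
Qed.

Lemma bounce_side F M W c z Q z' Q' l : F \in arcs H -> ends H F = [set M; W] ->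
  [set l] \in nodes H -> c \in M -> c \notin F -> z \in F -> z \in M -> z \in Q ->
  path e c Q -> last c Q = l -> z' \in F -> z' \in M -> z' \in Q' -> cross Q Q' ->
  (l \in F /\ [set l] = W) \/ exitd F Q Q W.
Proof.
move=> FA eF lN cM cF zF zM zQ pQ lQ z'F z'M z'Q' cQ.
have [r [pr lr sr]] := suffix_path pQ zQ.
rewrite lQ in lr.
have lX : l \in X by apply: (subsetP (nodesX lN)); rewrite inE.
have [lF|lF] := boolP (l \in F).
  left; split => //.
  have := end_of FA lN lF (set11 l); rewrite eF !inE => /orP[]/eqP eM; last by [].
  move: cM zM; rewrite -eM !inE => /eqP ec /eqP ez.
  by move: cF; rewrite ec -ez zF.
move: lX lF; rewrite -lr => lX lF.
have [M' ex] := exit_lem FA zF pr lX lF.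
case: (ex) => [y [z2 [G [[yA z2B yF z2G] [GA nGF M'F M'G] /andP[yM z2M]]]]].
move: M'F; rewrite eF !inE => /orP[]/eqP eM'.
  subst M'.
  have ee : e z2 z' by apply: (adj6 GA FA nGF z2G z'F M'G) => //; rewrite eF !inE eqxx.
  by move: (cQ z2 z' (sr _ z2B) z'Q'); rewrite ee.
subst M'; right; apply: (exitd_sub _ sr ex) => x; rewrite inE => /orP[/eqP->//|/sr//].
Qed.


Lemma pair_exit E c Qi Qj li lj M : E \in arcs H -> cross Qi Qj -> li != lj ->
  [set li] \in nodes H -> [set lj] \in nodes H ->
  path e c Qi -> last c Qi = li -> path e c Qj -> last c Qj = lj ->
  exitd E (c :: Qi) Qi M -> exitd E (c :: Qj) Qj M -> False.
Proof.
move=> EA cQ nl liN ljN pi li_ pj lj_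
  [yi [zi [Fi [[yiQ ziQ yiE ziF] [FiA nFiE ME MFi] /andP[yiM ziM]]]]]
  [yj [zj [Fj [[yjQ zjQ yjE zjF] [FjA nFjE _ MFj] /andP[yjM zjM]]]]].
have [yic|yic] := eqVneq yi c; last first.
  have yiQ' : yi \in Qi by move: yiQ; rewrite inE (negbTE yic).
  have ee : e yi zj by apply: (adj6 EA FjA _ yiE zjF ME MFj yiM zjM); rewrite eq_sym.
  by move: (cQ _ _ yiQ' zjQ); rewrite ee.
have [yjc|yjc] := eqVneq yj c; last first.
  have yjQ' : yj \in Qj by move: yjQ; rewrite inE (negbTE yjc).
  have ee : e yj zi by apply: (adj6 EA FiA _ yjE ziF ME MFi yjM ziM); rewrite eq_sym.
  by move: (cQ _ _ ziQ yjQ'); rewrite e_sym ee.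
subst yi yj.
have [eF|nF] := eqVneq Fi Fj; last first.
  have ee : e zi zj by apply: (adj6 FiA FjA nF ziF zjF MFi MFj ziM zjM).
  by move: (cQ _ _ ziQ zjQ); rewrite ee.
subst Fj.
have [W nWM eF] := ends2 FiA MFi.
have cF : c \notin Fi.
  by apply/negP => cF; move: nFiE; rewrite (arc_uniq FiA EA cF yiE) eqxx.
have si := bounce_side FiA eF liN yiM cF ziF ziM ziQ pi li_ zjF zjM zjQ cQ.
have sj := bounce_side FiA eF ljN yiM cF zjF zjM zjQ pj lj_ ziF ziM ziQ (cross_sym cQ).
case: si sj => [[liF eWi]|exi] [[ljF eWj]|exj].
- by move: nl; rewrite -(set1_inj (etrans eWi (esym eWj))) eqxx.
- by subst W; apply: (stay_exit FiA liF exj).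
- by subst W; apply: (stay_exit FiA ljF exi).
case: exi => [y [z [G [[yQ _ yF _] [_ _ WF _] /andP[yW _]]]]].
case: exj => [y' [z' [G' [[_ z'Q _ z'G'] [G'A nG'F _ WG'] /andP[_ z'W]]]]].
have ee : e y z' by apply: (adj6 FiA G'A _ yF z'G' WF WG' yW z'W); rewrite eq_sym.
by move: (cQ _ _ yQ z'Q); rewrite ee.
Qed.

Definition status E c Q l M :=
  M \in ends H E /\ ((l \in E /\ M = [set l]) \/ exitd E (c :: Q) Q M).

Lemma status_pair E c Qi Qj li lj M : E \in arcs H -> cross Qi Qj -> li != lj ->
  [set li] \in nodes H -> [set lj] \in nodes H ->
  path e c Qi -> last c Qi = li -> path e c Qj -> last c Qj = lj ->
  status E c Qi li M -> status E c Qj lj M -> False.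
Proof.
move=> EA cQ nl liN ljN pi li_ pj lj_ [_ [[liE eMi]|exi]] [_ [[ljE eMj]|exj]].
- by move: nl; rewrite -(set1_inj (etrans (esym eMi) eMj)) eqxx.
- by subst M; apply: (stay_exit EA liE exj).
- by subst M; apply: (stay_exit EA ljE exi).
exact: (pair_exit EA cQ nl liN ljN pi li_ pj lj_ exi exj).
Qed.

Lemma status_ex E c Q l a s : E \in arcs H -> a \in E -> path e a s -> last a s = l ->
  [set l] \in nodes H -> {subset a :: s <= c :: Q} -> {subset s <= Q} ->
  exists M, status E c Q l M.
Proof.
move=> EA aE pa la lN s1 s2.
have lX : l \in X by apply: (subsetP (nodesX lN)); rewrite inE.
have [lE|lE] := boolP (l \in E).
  exists [set l]; split; last by left.
  exact: (end_of EA lN lE (set11 l)).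
move: lX lE; rewrite -la => lX lE.
have [M ex] := exit_lem EA aE pa lX lE.
exists M; split; last by right; apply: (exitd_sub s1 s2 ex).
by case: ex => [y [z [F [_ [_ _ ME _] _]]]].
Qed.

Lemma three E c Q1 Q2 Q3 l1 l2 l3 M1 M2 M3 : E \in arcs H ->
  cross Q1 Q2 -> cross Q1 Q3 -> cross Q2 Q3 ->
  l1 != l2 -> l1 != l3 -> l2 != l3 ->
  [set l1] \in nodes H -> [set l2] \in nodes H -> [set l3] \in nodes H ->
  path e c Q1 -> last c Q1 = l1 -> path e c Q2 -> last c Q2 = l2 ->
  path e c Q3 -> last c Q3 = l3 ->
  status E c Q1 l1 M1 -> status E c Q2 l2 M2 -> status E c Q3 l3 M3 -> False.
Proof.
move=> EA c12 c13 c23 n12 n13 n23 N1 N2 N3 p1 e1 p2 e2 p3 e3 s1 s2 s3.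
have [A [B [nAB eE]]] : exists A B, A != B /\ ends H E = [set A; B].
  by case: (wf EA) => _ /eqP/cards2P.
have m1 := s1.1; have m2 := s2.1; have m3 := s3.1.
rewrite eE !inE in m1 m2 m3.
have h12 : M1 != M2.
  by apply/negP => /eqP e12; subst M2; exact: (status_pair EA c12 n12 N1 N2 p1 e1 p2 e2 s1 s2).
have h13 : M1 != M3.
  by apply/negP => /eqP e13; subst M3; exact: (status_pair EA c13 n13 N1 N3 p1 e1 p3 e3 s1 s3).
have h23 : M2 != M3.
  by apply/negP => /eqP e23; subst M3; exact: (status_pair EA c23 n23 N2 N3 p2 e2 p3 e3 s2 s3).
by case/orP: m1 => /eqP ?; case/orP: m2 => /eqP ?; case/orP: m3 => /eqP ?; subst;
  rewrite ?eqxx in h12 h13 h23.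
Qed.


Lemma first_X c Q : c \notin X -> last c Q \in X ->
  exists t x r, [/\ Q = t ++ x :: r, all (fun y => y \notin X) t & x \in X].
Proof.
elim: Q c => [|b Q IH] c cX /=; first by rewrite (negbTE cX).
move=> lX; have [bX|bX] := boolP (b \in X).
  by exists [::], b, Q.
have [t [x [r [-> tX xX]]]] := IH b bX lX.
by exists (b :: t), x, r; rewrite /= bX tX.
Qed.

Lemma core c Q1 Q2 Q3 l1 l2 l3 :
  cross Q1 Q2 -> cross Q1 Q3 -> cross Q2 Q3 ->
  l1 != l2 -> l1 != l3 -> l2 != l3 ->
  [set l1] \in nodes H -> [set l2] \in nodes H -> [set l3] \in nodes H ->
  path e c Q1 -> last c Q1 = l1 -> path e c Q2 -> last c Q2 = l2 ->
  path e c Q3 -> last c Q3 = l3 -> False.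
Proof.
move=> c12 c13 c23 n12 n13 n23 N1 N2 N3 p1 e1 p2 e2 p3 e3.
have lX : forall l, [set l] \in nodes H -> l \in X.
  by move=> l lN; apply: (subsetP (nodesX lN)); rewrite inE.
have [cX|cX] := boolP (c \in X).
  have [E EA cE] := arc_ex cX.
  have sub1 : forall Q : seq T, {subset c :: Q <= c :: Q} by move=> Q x.
  have sub2 : forall Q : seq T, {subset Q <= Q} by move=> Q x.
  have [M1 s1] := status_ex EA cE p1 e1 N1 (sub1 Q1) (sub2 Q1).
  have [M2 s2] := status_ex EA cE p2 e2 N2 (sub1 Q2) (sub2 Q2).
  have [M3 s3] := status_ex EA cE p3 e3 N3 (sub1 Q3) (sub2 Q3).
  exact: (three EA c12 c13 c23 n12 n13 n23 N1 N2 N3 p1 e1 p2 e2 p3 e3 s1 s2 s3).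
have lX' : forall Q l, last c Q = l -> [set l] \in nodes H -> last c Q \in X.
  by move=> Q l <-; exact: lX.
have [t1 [x1 [r1 [eQ1 t1X x1X]]]] := first_X cX (lX' _ _ e1 N1).
have [t2 [x2 [r2 [eQ2 t2X x2X]]]] := first_X cX (lX' _ _ e2 N2).
have [t3 [x3 [r3 [eQ3 t3X x3X]]]] := first_X cX (lX' _ _ e3 N3).
subst Q1 Q2 Q3.
have pp : forall t x r, path e c (t ++ x :: r) ->
    [/\ path e c t, e (last c t) x & path e x r].
  by move=> t x r; rewrite cat_path /= => /and3P[].
have [pt1 ex1 pr1] := pp _ _ _ p1.
have [pt2 ex2 pr2] := pp _ _ _ p2.
have [pt3 ex3 pr3] := pp _ _ _ p3.
have ll : forall t x r l, last c (t ++ x :: r) = l -> last x r = l.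
  by move=> t x r l; rewrite last_cat.
set Y := [set y in c :: t1 ++ t2 ++ t3].
have YX : Y \subset ~: X.
  apply/subsetP => y; rewrite !inE mem_cat => /orP[/eqP->//|/orP[yt|]].
    by move/allP: t1X => /(_ y yt).
  rewrite mem_cat => /orP[yt|yt]; [by move/allP: t2X => /(_ y yt)|by move/allP: t3X => /(_ y yt)].
have tY : forall t : seq T, {subset t <= t1} \/ {subset t <= t2} \/ {subset t <= t3} ->
    forall y, y \in t -> y \in Y.
  move=> t [h|[h|h]] y /(h y) yt; rewrite !inE !mem_cat yt ?orbT //.
have cY : conn_in e Y.
  apply: (conn_root (r := c)); first by rewrite inE mem_head.
  move=> y; rewrite inE in_cons => /orP[/eqP->|]; first by exists [::].
  have gen : forall t : seq T, path e c t -> {subset t <= t1} \/ {subset t <= t2} \/ {subset t <= t3} ->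
      y \in t -> exists p, [/\ path e c p, all (mem Y) p & last c p = y].
    move=> t pt ht yt; have yct : y \in c :: t by rewrite in_cons yt orbT.
    have [p [pp' sp lp]] := prefix_path pt yct.
    exists p; split => //; apply/allP => z /sp zt; exact: (tY t ht z zt).
  rewrite mem_cat => /orP[yt|]; first by apply: (gen t1) => //; left.
  rewrite mem_cat => /orP[yt|yt]; first by apply: (gen t2) => //; right; left.
  by apply: (gen t3) => //; right; right.
have tm := tame YX cY.
have nb : forall t x, (forall y, y \in c :: t -> y \in Y) -> x \in X -> e (last c t) x ->
    x \in nbrs_in e X Y.
  move=> t x hY xX ex; rewrite inE xX /=; apply/existsP; exists (last c t).
  by rewrite hY ?mem_last //= e_sym.
have hY : forall t : seq T, {subset t <= t1} \/ {subset t <= t2} \/ {subset t <= t3} ->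
    forall y, y \in c :: t -> y \in Y.
  move=> t ht y; rewrite in_cons => /orP[/eqP->|]; first by rewrite inE mem_head.
  exact: tY.
have b1 := nb _ _ (hY t1 (or_introl (fun _ h => h))) x1X ex1.
have b2 := nb _ _ (hY t2 (or_intror (or_introl (fun _ h => h)))) x2X ex2.
have b3 := nb _ _ (hY t3 (or_intror (or_intror (fun _ h => h)))) x3X ex3.
have same : forall x x' Qa Qb K, x \in nbrs_in e X Y -> x' \in nbrs_in e X Y ->
    x \in Qa -> x' \in Qb -> cross Qa Qb -> K \in arcs H -> x \in K -> x' \in K.
  move=> x x' Qa Qb K bx bx' xQ xQ' cab KA xK.
  have x'X : x' \in X by move: bx'; rewrite inE => /andP[].
  have [K' K'A x'K'] := arc_ex x'X.
  have [eK|nK] := eqVneq K K'; first by rewrite eK.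
  case: (tm x x' bx bx') => [[M MA /andP[xM x'M]]|[N NN /andP[xN x'N]]].
    by rewrite (arc_uniq KA MA xK xM) (arc_uniq K'A MA x'K' x'M) in nK; rewrite eqxx in nK.
  have ee : e x x' by apply: (adj6 KA K'A nK xK x'K' (end_of KA NN xK xN) (end_of K'A NN x'K' x'N) xN x'N).
  by move: (cab x x' xQ xQ'); rewrite ee.
have mx : forall (t : seq T) x r, x \in t ++ x :: r by move=> t x r; rewrite mem_cat mem_head orbT.
have [E EA x1E] := arc_ex x1X.
have x2E := same _ _ _ _ _ b1 b2 (mx _ _ _) (mx _ _ _) c12 EA x1E.
have x3E := same _ _ _ _ _ b1 b3 (mx _ _ _) (mx _ _ _) c13 EA x1E.
have sb1 : forall (t : seq T) x r, {subset x :: r <= c :: t ++ x :: r}.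
  by move=> t x r y yr; rewrite in_cons mem_cat yr !orbT.
have sb2 : forall (t : seq T) (x : T) r, {subset r <= t ++ x :: r}.
  by move=> t x r y yr; rewrite mem_cat in_cons yr !orbT.
have [M1 s1] := status_ex EA x1E pr1 (ll _ _ _ _ e1) N1 (sb1 t1 x1 r1) (sb2 t1 x1 r1).
have [M2 s2] := status_ex EA x2E pr2 (ll _ _ _ _ e2) N2 (sb1 t2 x2 r2) (sb2 t2 x2 r2).
have [M3 s3] := status_ex EA x3E pr3 (ll _ _ _ _ e3) N3 (sb1 t3 x3 r3) (sb2 t3 x3 r3).
exact: (three EA c12 c13 c23 n12 n13 n23 N1 N2 N3 p1 e1 p2 e2 p3 e3 s1 s2 s3).
Qed.

End Net.

Lemma ex_minP (P : nat -> Prop) : (exists n, P n) -> exists n, P n /\ forall m, m < n -> ~ P m.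
Proof.
case=> n Pn; elim: n {-2}n (leqnn n) Pn => [|N IH] n leN Pn.
  by exists n; split => // m; move: leN; rewrite leqn0 => /eqP ->.
case: (classic (exists m, m < n /\ P m)) => [[m [ltmn Pm]]|nm].
  by apply: (IH m) => //; rewrite -ltnS (leq_trans ltmn leN).
by exists n; split => // m ltmn Pm; apply: nm; exists m.
Qed.

Section Seqs.
Variable T : eqType.
Variable e : rel T.
Hypothesis e_sym : symmetric e.

Lemma last_take (x : T) (p : seq T) i : i <= size p -> last x (take i p) = nth x (x :: p) i.
Proof.
elim: p x i => [|y p IH] x [|i] //=.
rewrite ltnS => lei; rewrite IH //; apply: set_nth_default => /=; by rewrite ltnS.
Qed.

Lemma sorted_drop (s : seq T) j : sorted e s -> sorted e (drop j s).
Proof. by rewrite -{1}(cat_take_drop j s) => /cat_sorted2[]. Qed.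

Lemma sorted_take (s : seq T) j : sorted e s -> sorted e (take j s).
Proof. by rewrite -{1}(cat_take_drop j s) => /cat_sorted2[]. Qed.

Lemma path_drop (x : T) (p : seq T) j : path e x p -> j < size (x :: p) ->
  path e (nth x (x :: p) j) (drop j.+1 (x :: p)).
Proof.
move=> pp lj; have := sorted_drop j (pp : sorted e (x :: p)).
by rewrite (drop_nth x lj).
Qed.

Lemma last_drop (x : T) (p : seq T) j (y : T) : j < size (x :: p) -> last y (drop j (x :: p)) = last x p.
Proof.
move=> lj; rewrite -(last_cons x x p) -{2}(cat_take_drop j (x :: p)) last_cat.
by rewrite (drop_nth x lj).
Qed.

Lemma splice (x : T) (p : seq T) i (rest : seq T) : path e x p -> i <= size p -> path e (nth x (x :: p) i) rest ->
  path e x (take i p ++ rest) /\ last x (take i p ++ rest) = last (nth x (x :: p) i) rest.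
Proof.
move=> pp li pr; rewrite cat_path last_cat last_take // pr andbT; split => //.
exact: (sorted_take i.+1 (pp : sorted e (x :: p))).
Qed.

Lemma sorted_flip (s : seq T) : sorted (fun x y => e y x) s = sorted e s.
Proof. by case: s => //= x s; apply: eq_path => a b; rewrite e_sym. Qed.

Lemma last_rev (x : T) (s : seq T) : last x (rev s) = head x s.
Proof. by case: s => //= y s; rewrite rev_cons last_rcons. Qed.

End Seqs.

Lemma ar_le i j n : i < j -> j < n.+1 -> i <= n.
Proof. lia. Qed.
Lemma ar1 i j n : i < j -> j < n.+1 -> (if i < n then i else n) + (n.+1 - j.+1) < n.
Proof. case: ifP; lia. Qed.
Lemma ar2 i j n : i.+1 < j -> j < n.+1 -> (if i < n then i else n) + (n.+1 - j) < n.
Proof. case: ifP; lia. Qed.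
Lemma ar3 a b n : a < b -> b < n.+1 -> a + 3 <= b -> (if a < n then a else n) + (n.+1 - b).+1 < n.
Proof. case: ifP; lia. Qed.
Lemma ar4 a b : a < b -> b < a + 3 -> b != a.+1 -> b = a.+2.
Proof. move=> h1 h2 /eqP h3; lia. Qed.

Lemma ar5 t n : t < n -> n <= t.+1 -> t = n.-1.
Proof. lia. Qed.

Section Spider.
Variable T : finType.
Variable e : rel T.
Hypothesis e_sym : symmetric e.
Variable S : {set T}.
Hypothesis connS : conn_in e S.
Hypothesis acyc : ~ has_cycle_in e S.
Variables l1 l2 l3 : T.
Hypotheses (l1S : l1 \in S) (l2S : l2 \in S) (l3S : l3 \in S).

Lemma all_sub (A B : seq T) : {subset A <= B} -> all (mem S) B -> all (mem S) A.
Proof. by move=> sAB /allP aB; apply/allP => x /sAB /aB. Qed.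

Lemma spider : exists c Q1 Q2 Q3,
  [/\ [/\ path e c Q1, last c Q1 = l1, path e c Q2, last c Q2 = l2 & path e c Q3],
      last c Q3 = l3 & [/\ cross e Q1 Q2, cross e Q1 Q3 & cross e Q2 Q3]].
Proof.
have ex0 : exists n, exists p,
   [/\ path e l1 p, last l1 p = l2, all (mem S) p & size p = n].
  by case: (connS l1S l2S) => p [h1 h2 h3]; exists (size p), p.
have [n [[p [pp lp ap sp]] minp]] := ex_minP ex0.
subst n.
have noshort : forall p', path e l1 p' -> last l1 p' = l2 -> all (mem S) p' ->
    size p' < size p -> False.
  by move=> p' h1 h2 h3 h4; apply: (minp _ h4); exists p'.
set L := l1 :: p.
have aL : all (mem S) L by rewrite /= l1S ap.
have sL : size L = (size p).+1 by [].
have ld1 : forall j, j < size L -> last (nth l1 L j) (drop j.+1 L) = l2.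
  by move=> j lj; rewrite -lp -(last_drop l1 lj) (drop_nth l1 lj).
have uL : uniq L.
  apply: contraT => /(uniqPn l1)[i [j [lij ljs eij]]]; exfalso.
  have lip : i <= size p by apply: (ar_le lij); rewrite -sL.
  have pd : path e (nth l1 L i) (drop j.+1 L) by rewrite eij; apply: path_drop.
  have [h1 h2] := splice pp lip pd.
  apply: (noshort _ h1); first by rewrite h2 eij ld1.
    by apply: (all_sub _ aL) => x; rewrite mem_cat => /orP[/mem_take xp|/mem_drop //]; rewrite inE xp orbT.
  by rewrite size_cat size_take size_drop sL; apply: ar1 => //; rewrite -sL.
have chord : forall i j, i.+1 < j -> j < size L -> ~~ e (nth l1 L i) (nth l1 L j).
  move=> i j lij ljs; apply/negP => eij.
  have lip : i <= size p by apply: (ar_le (ltnW lij)); rewrite -sL.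
  have pd : path e (nth l1 L i) (drop j L) by rewrite (drop_nth l1 ljs) /= eij path_drop.
  have [h1 h2] := splice pp lip pd.
  apply: (noshort _ h1); first by rewrite h2 (last_drop _ ljs).
    by apply: (all_sub _ aL) => x; rewrite mem_cat => /orP[/mem_take xp|/mem_drop //]; rewrite inE xp orbT.
  by rewrite size_cat size_take size_drop sL; apply: ar2 => //; rewrite -sL.
have consec : forall a, a.+1 < size L -> e (nth l1 L a) (nth l1 L a.+1).
  by move=> a la; move/(pathP l1): pp => /(_ a la).
have exq : exists n, exists q,
   [/\ path e l3 q, last l3 q \in L, all (mem S) q & size q = n].
  case: (connS l3S l1S) => q [h1 h2 h3]; exists (size q), q.
  by split => //; rewrite h3 mem_head.
have [m [[q [pq lq aq sq]] minq]] := ex_minP exq.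
subst m.
have noshortq : forall q', path e l3 q' -> last l3 q' \in L -> all (mem S) q' ->
    size q' < size q -> False.
  by move=> q' h1 h2 h3 h4; apply: (minq _ h4); exists q'.
have qout : forall t, t < size q -> nth l3 (l3 :: q) t \notin L.
  move=> t lt; apply/negP => hL.
  apply: (noshortq (take t q)).
  - exact: (sorted_take t.+1 (pq : sorted e (l3 :: q))).
  - by rewrite last_take // ltnW.
  - by apply: (all_sub _ aq) => x /mem_take.
  - by rewrite size_take lt.
have qnadj : forall t, t.+1 < size q -> forall x, x \in L -> ~~ e (nth l3 (l3 :: q) t) x.
  move=> t lt x xL; apply/negP => ex.
  apply: (noshortq (rcons (take t q) x)).
  - rewrite rcons_path; apply/andP; split.
      exact: (sorted_take t.+1 (pq : sorted e (l3 :: q))).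
    by rewrite last_take //; apply: ltnW; apply: ltnW.
  - by rewrite last_rcons.
  - rewrite all_rcons (allP aL x xL) /=; by apply: (all_sub _ aq) => y /mem_take.
  - by rewrite size_rcons size_take (ltnW lt).
set c := last l3 q.
set k := index c L.
have lk : k < size L by rewrite index_mem.
have nk : nth l1 L k = c by rewrite nth_index.
have tri : forall w a b, a < b -> b < size L -> w \notin L -> w \in S ->
    e w (nth l1 L a) -> e w (nth l1 L b) -> False.
  move=> w a b lab lb wL wS ea eb.
  have naL : nth l1 L a \in L by apply: mem_nth; exact: ltn_trans lab lb.
  have nbL : nth l1 L b \in L by apply: mem_nth.
  have nab : nth l1 L a != nth l1 L b by rewrite nth_uniq // ?(ltn_trans lab lb) // neq_ltn lab.
  have wa : w != nth l1 L a by apply/negP => /eqP ew; rewrite ew naL in wL.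
  have wb : w != nth l1 L b by apply/negP => /eqP ew; rewrite ew nbL in wL.
  have aS : nth l1 L a \in S by apply: (allP aL).
  have bS : nth l1 L b \in S by apply: (allP aL).
  have [h3|h3] := leqP (a + 3) b.
    have lap : a <= size p by apply: (ar_le lab); rewrite -sL.
    have pd : path e (nth l1 L a) (w :: drop b L).
      by rewrite /= (drop_nth l1 lb) /= e_sym ea eb path_drop.
    have [h1 h2] := splice pp lap pd.
    apply: (noshort _ h1).
    - by rewrite h2 /= (last_drop _ lb).
    - rewrite all_cat /= wS /=; apply/andP; split.
        by apply: (all_sub _ ap) => x /mem_take.
      by apply: (all_sub _ aL) => x /mem_drop.
    - by rewrite size_cat /= size_take size_drop sL; apply: ar3 => //; rewrite -sL.
  have [eb1|nb1] := eqVneq b a.+1.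
    subst b; apply: acyc; exists [:: w; nth l1 L a; nth l1 L a.+1]; split => //.
    - by rewrite /= !inE negb_or wa wb nab.
    - by rewrite /= wS aS bS.
    - by rewrite /= ea consec // e_sym eb.
  have eb2 := ar4 lab h3 nb1.
  subst b.
  have nmL : a.+1 < size L by apply: ltn_trans lb.
  have mS : nth l1 L a.+1 \in S by apply: (allP aL); apply: mem_nth.
  have nam : nth l1 L a != nth l1 L a.+1 by rewrite nth_uniq // ?(ltn_trans lab lb) // neq_ltn ltnSn.
  have nmb : nth l1 L a.+1 != nth l1 L a.+2 by rewrite nth_uniq // neq_ltn ltnSn.
  have wm : w != nth l1 L a.+1.
    by apply/negP => /eqP ew; rewrite ew mem_nth in wL.
  apply: acyc; exists [:: w; nth l1 L a; nth l1 L a.+1; nth l1 L a.+2]; split => //.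
  - by rewrite /= !inE !negb_or wa wm wb nam nab nmb.
  - by rewrite /= wS aS mS bS.
  - have c1 := consec a nmL; have c2 := consec a.+1 lb.
    by move: ea eb c1 c2; rewrite /= => -> eb -> ->; rewrite e_sym eb.
have kp : k <= size p by rewrite -ltnS -sL.
have sS : forall x, x \in l3 :: q -> x \in S.
  by move=> x; rewrite inE => /orP[/eqP->//|/(allP aq)].
have pQ1 : path e c (rev (take k L)).
  have := sorted_take k.+1 (pp : sorted e L).
  rewrite (take_nth l1 lk) nk -(sorted_flip e_sym) -rev_sorted rev_rcons //.
have lQ1 : last c (rev (take k L)) = l1.
  by rewrite last_rev; move: nk; case: (k) => //= _ <-.
have pQ2 : path e c (drop k.+1 L) by rewrite -nk; apply: path_drop.
have lQ2 : last c (drop k.+1 L) = l2 by rewrite -nk; apply: ld1.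
have eq3 : l3 :: q = rcons (belast l3 q) c by rewrite -lastI.
have pQ3 : path e c (rev (belast l3 q)).
  have := (pq : sorted e (l3 :: q)).
  by rewrite eq3 -(sorted_flip e_sym) -rev_sorted rev_rcons.
have lQ3 : last c (rev (belast l3 q)) = l3.
  rewrite last_rev; rewrite /c; case: (q) => //= y q'.
have memQ1 : forall x, x \in rev (take k L) -> exists2 i, i < k & x = nth l1 L i.
  move=> x; rewrite mem_rev => xt; exists (index x (take k L)).
    by move: xt; rewrite -index_mem size_take lk.
  by rewrite -(nth_take _ (_ : index x (take k L) < k)) ?nth_index //;
     move: xt; rewrite -index_mem size_take lk.
have memQ2 : forall x, x \in drop k.+1 L -> exists2 j, k < j /\ j < size L & x = nth l1 L j.
  move=> x xd; exists (k.+1 + index x (drop k.+1 L)).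
    split; first by rewrite ltnS leq_addr.
    by move: xd; rewrite -index_mem size_drop; rewrite -ltn_subRL.
  by rewrite -nth_drop nth_index.
have memQ3 : forall w, w \in rev (belast l3 q) -> exists2 t, t < size q & w = nth l3 (l3 :: q) t.
  move=> w; rewrite mem_rev => wb; exists (index w (belast l3 q)).
    by rewrite -(size_belast l3 q) index_mem.
  by rewrite eq3 nth_rcons size_belast ifT ?nth_index // -(size_belast l3 q) index_mem.
have crossL3 : forall j, j < size L -> j != k -> forall w, w \in rev (belast l3 q) ->
    ~~ e (nth l1 L j) w.
  move=> j lj njk w /memQ3[t lt ->].
  have [lt1|lt1] := ltnP t.+1 (size q).
    by rewrite e_sym; apply: qnadj => //; apply: mem_nth.
  have et : t = (size q).-1 by apply: ar5.
  have wL := qout t lt.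
  have wS : nth l3 (l3 :: q) t \in S by apply: sS; apply: mem_nth; rewrite /= ltnS; exact: ltnW.
  have ewc : e (nth l3 (l3 :: q) t) c.
    move/(pathP l3): pq => /(_ t lt); rewrite {2}et nth_last //.
  apply/negP => ejw; rewrite e_sym in ejw.
  rewrite -nk in ewc.
  case: (ltngtP j k) => hjk; last by rewrite hjk eqxx in njk.
    exact: (tri _ _ _ hjk lk wL wS ejw ewc).
  exact: (tri _ _ _ hjk lj wL wS ewc ejw).
exists c, (rev (take k L)), (drop k.+1 L), (rev (belast l3 q)); split => //; split.
- move=> x w /memQ1[i li ->] /memQ2[j [lkj lj] ->]; apply: chord => //.
  exact: (leq_ltn_trans li lkj).
- move=> x w /memQ1[i li ->]; apply: crossL3; first by apply: ltn_trans lk.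
  by rewrite neq_ltn li.
- move=> x w /memQ2[j [lkj lj] ->]; apply: crossL3 => //.
  by rewrite neq_ltn lkj orbT.
Qed.
End Spider.

Lemma card3_elems (U : finType) (A : {set U}) : #|A| = 3 ->
  exists a b c, [/\ a \in A, b \in A & c \in A] /\ [/\ a != b, a != c & b != c].
Proof.
move=> cA; have : 0 < #|A| by rewrite cA.
case/card_gt0P => a aA.
have : #|A :\ a| == 2 by move: cA; rewrite (cardsD1 a) aA add1n => -[->].
case/cards2P => b [c [nbc eA]].
have bA : b \in A :\ a by rewrite eA !inE eqxx.
have cA' : c \in A :\ a by rewrite eA !inE eqxx orbT.
move: bA cA'; rewrite !inE => /andP[nba bA] /andP[nca cA'].
by exists a, b, c; split; split => //; rewrite eq_sym.
Qed.

Theorem lemma3p5 (T : finType) (e : rel T)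
    (e_sym : symmetric e) (e_irr : irreflexive e)
    (three_leaves : #|leavesG e| = 3) :
  (forall (X : {set T}) (H : mgraph T),
      is_net e H X -> taming e H X -> ~ exists S : {set T}, sapling e S) /\
  (forall (X : {set T}) (H : mgraph T),
      is_net e H X -> ~ has_parallel_arcs H ->
      forall S : {set T}, S \subset X -> tamed_in H S -> local H S).
Proof.
split.
  move=> X H [wf [nodesX [_ [part [[c3 lf] [_ [N5 N6]]]]]]] tame [S [[_ [connS acyc]] lS]].
  have [V1 [V2 [V3 [[V1L V2L V3L] [n12 n13 n23]]]]] := card3_elems c3.
  have [l1 [lf1 eV1]] := lf _ V1L.
  have [l2 [lf2 eV2]] := lf _ V2L.
  have [l3 [lf3 eV3]] := lf _ V3L.
  have inN : forall V, V \in leafnodes H -> V \in nodes H.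
    by move=> V; rewrite inE => /andP[].
  have inS : forall l, leafG e l -> l \in S.
    by move=> l ll; apply: (subsetP lS); rewrite inE.
  have [c [Q1 [Q2 [Q3 [[p1 e1 p2 e2 p3] e3 [c12 c13 c23]]]]]] :=
    spider e_sym connS acyc (inS _ lf1) (inS _ lf2) (inS _ lf3).
  subst V1 V2 V3.
  have nl : forall a b : T, [set a] != [set b] -> a != b.
    by move=> a b; apply: contra => /eqP ->.
  exact: (core e_sym wf nodesX part N5 N6 tame c12 c13 c23 (nl _ _ n12) (nl _ _ n13)
            (nl _ _ n23) (inN _ V1L) (inN _ V2L) (inN _ V3L) p1 e1 p2 e2 p3 e3).
move=> X H [wf [nodesX [_ [part [[c3 lf] [_ [N5 N6]]]]]]] npar S sX tS.
apply: (part2 wf part N5) => //.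
have : 0 < #|leafnodes H| by rewrite c3.
case/card_gt0P => V; rewrite inE => /andP[VN _]; by exists V.
Qed.
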